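(* Let $G$ be a connected graph with a vertex $u$. Let $v\in N(u)$ with $d(v)\le d(u)-2$, and let $w\in V(G)\setminus N[u]$ be a neighbor of $v$. If $|N(v)\setminus N[u]|\in\{1,2\}$ and $N(z)\setminus \{v\}\subseteq N(v)\setminus N(u)$ for every $z\in N(v)\setminus N[u]$, then $q(G-vw+uw)>q(G)$.
   Context: $N(x)$ is the neighborhood of $x$, $N[x]=N(x)\cup\{x\}$, $d(x)=|N(x)|$. $Q(G)=D(G)+A(G)$ is the signless Laplacian and $q(G)$ its largest eigenvalue. $G-vw+uw$ denotes the graph obtained by deleting edge $vw$ and adding edge $uw$. *)

(* Defs.v *)
From HB Require Import structures.
From mathcomp Require Import all_boot all_order all_algebra.
From mathcomp Require Import reals.
Set Implicit Arguments. Unset Strict Implicit. Unset Printing Implicit Defensive.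
Import Order.TTheory GRing.Theory Num.Theory.
Local Open Scope ring_scope.

Definition simple_graph (n : nat) (e : rel 'I_n) : Prop :=
  symmetric e /\ irreflexive e.

Definition connected_graph (n : nat) (e : rel 'I_n) : Prop :=
  forall x y : 'I_n, connect e x y.

Definition nbhd (n : nat) (e : rel 'I_n) (x : 'I_n) : {set 'I_n} :=
  [set y | e x y].
Definition deg (n : nat) (e : rel 'I_n) (x : 'I_n) : nat := #|nbhd e x|.

Definition adjmx (R : nzRingType) (n : nat) (e : rel 'I_n) : 'M[R]_n :=
  \matrix_(i, j) (e i j)%:R.
Definition degmx (R : nzRingType) (n : nat) (e : rel 'I_n) : 'M[R]_n :=
  diag_mx (\row_i (deg e i)%:R).
Definition signless_laplacian (R : nzRingType) (n : nat) (e : rel 'I_n)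
  : 'M[R]_n := degmx R e + adjmx R e.

Definition is_q (R : realFieldType) (n : nat) (e : rel 'I_n) (q : R) : Prop :=
  eigenvalue (signless_laplacian R e) q /\
  forall a : R, eigenvalue (signless_laplacian R e) a -> a <= q.

Definition move_edge (n : nat) (e : rel 'I_n) (v w u : 'I_n) : rel 'I_n :=
  fun x y =>
    (e x y && ~~ (((x == v) && (y == w)) || ((x == w) && (y == v))))
    || ((x == u) && (y == w)) || ((x == w) && (y == u)).

(* Main.v *)
Require Import Defs.
From HB Require Import structures.
From mathcomp Require Import all_boot all_order all_algebra.
From mathcomp Require Import reals.
From mathcomp Require Import complex ring lra.
Import Order.TTheory GRing.Theory Num.Theory.
Local Open Scope ring_scope.

Module Ray.
Import Num.Def.
Local Open Scope sesquilinear_scope.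
Lemma rayleigh (R : rcfType) n (A : 'M[R]_n) (l : R) :
  A^T = A -> (forall a, eigenvalue A a -> a <= l) ->
  forall y : 'rV[R]_n, (y *m A *m y^T) 0 0 <= l * (y *m y^T) 0 0.
Proof.
move=> sA hl y.
pose f : {rmorphism R -> R[i]} := real_complex R.
have freal : forall x : R, f x \is Num.real by move=> x; rewrite complex_real.
pose Ac := map_mx f A.
have herm : Ac \is hermsymmx.
  apply/is_hermitianmxP; rewrite expr0 scale1r.
  apply/matrixP=> i j; rewrite !mxE conj_Creal //.
  by rewrite -[in LHS]sA mxE.
pose P := spectralmx Ac; pose d := spectral_diag Ac.
have AcE : Ac = invmx P *m diag_mx d *m P.
  by apply/orthomx_spectralP; apply: hermitian_normalmx.
have PU : P \is unitarymx := spectral_unitarymx Ac.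
have Pu : P \in unitmx := spectral_unit Ac.
have PPt : P *m P^t* = 1%:M by apply/unitarymxP.
have PtP : P^t* *m P = 1%:M by rewrite -invmx_unitary // mulVmx.
have dle : forall j, d 0 j <= f l.
  move=> j.
  have dreal : d 0 j \is Num.real.
    by apply: (mxOverP (hermitian_spectral_diag_real herm)).
  have : eigenvalue Ac (d 0 j).
    apply/eigenvalueP; exists (row j P).
      rewrite -row_mul AcE !mulmxA (mulmxV Pu) mul1mx row_mul row_diag_mx.
      by rewrite -scalemxAl -rowE.
    apply/eqP => h; have := congr1 (fun M => M *m P^t*) h.
    rewrite -row_mul PPt mul0mx => /rowP/(_ j); rewrite !mxE eqxx /=.
    by move/eqP; rewrite oner_eq0.
  rewrite -(RRe_real dreal) /Ac (eigenvalue_map f) => /hl.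
  by rewrite -lecR.
pose yc := map_mx f y.
pose w := P *m yc^T.
have ycc : map_mx conjC yc = yc.
  by apply/matrixP=> i j; rewrite !mxE conj_Creal.
have wt : w^t* = yc *m P^t*.
  by rewrite /w trmx_mul trmxK map_mxM ycc.
have E1 : f ((y *m A *m y^T) 0 0) = (w^t* *m diag_mx d *m w) 0 0.
  have -> : f ((y *m A *m y^T) 0 0) = ((y *m A *m y^T) ^ f) 0 0 by rewrite [RHS]mxE.
  rewrite !map_mxM -map_trmx -/Ac -/yc AcE wt /w invmx_unitary // !mulmxA //.
have E2 : f (l * (y *m y^T) 0 0) = f l * (w^t* *m w) 0 0.
  rewrite rmorphM; congr (_ * _).
  have -> : f ((y *m y^T) 0 0) = ((y *m y^T) ^ f) 0 0 by rewrite [RHS]mxE.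
  rewrite !map_mxM -map_trmx -/yc wt /w !mulmxA -(mulmxA yc) PtP mulmx1 //.
rewrite -lecR -/f E1 E2 mul_mx_diag !mxE big_distrr /=.
apply: ler_sum => j _; rewrite !mxE.
rewrite mulrAC [f l * _]mulrC.
apply: ler_wpM2l; [by rewrite mulrC mul_conjC_ge0 | exact: dle].
Qed.

End Ray.

Lemma sum_delta (R : nzRingType) n (a : 'I_n) (F : 'I_n -> R) :
  \sum_i (i == a)%:R * F i = F a.
Proof.
rewrite (bigD1 a) //= eqxx mul1r big1 ?addr0 // => i /negbTE ->.
by rewrite mul0r.
Qed.

Lemma Qij (R : nzRingType) n (e : rel 'I_n) i j :
  signless_laplacian R e i j = (i == j)%:R * (deg e i)%:R + (e i j)%:R.
Proof.
by rewrite /signless_laplacian /degmx /adjmx !mxE mulr_natl.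
Qed.

Lemma degE (R : nzRingType) n (e : rel 'I_n) i :
  (deg e i)%:R = \sum_j (e i j)%:R :> R.
Proof.
rewrite /deg /nbhd -sum1_card natr_sum big_mkcond /=.
by apply: eq_bigr => j _; rewrite inE; case: (e i j).
Qed.

Lemma qfE (R : comNzRingType) n (Q : 'M[R]_n) (y : 'rV[R]_n) :
  (y *m Q *m y^T) 0 0 = \sum_i \sum_j y 0 i * Q i j * y 0 j.
Proof.
rewrite mxE; under eq_bigr => k _ do rewrite !mxE big_distrl /=.
rewrite exchange_big /=; apply: eq_bigr => i _; apply: eq_bigr => j _.
by [].
Qed.

Lemma qfQ (R : comNzRingType) n (e : rel 'I_n) (y : 'rV[R]_n) :
  (y *m signless_laplacian R e *m y^T) 0 0 =
  \sum_i \sum_j (e i j)%:R * (y 0 i ^+ 2 + y 0 i * y 0 j).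
Proof.
rewrite qfE; apply: eq_bigr => i _.
under eq_bigr => j _ do rewrite Qij mulrDr mulrDl.
rewrite big_split /=.
under [X in _ = X]eq_bigr => j _ do rewrite mulrDr.
rewrite [X in _ = X]big_split /=; congr (_ + _); last first.
  by apply: eq_bigr => j _; rewrite mulrA [_ * y 0 i]mulrC.
transitivity (\sum_j (j == i)%:R * (y 0 i * (deg e i)%:R * y 0 j)).
  apply: eq_bigr => j _; have [->|nij] := eqVneq i j.
    by rewrite !mul1r.
  by rewrite !mul0r mulr0 mul0r.
rewrite sum_delta degE mulrAC mulrC big_distrl /=.
by apply: eq_bigr => j _; rewrite expr2.
Qed.

Lemma xQ (R : comNzRingType) n (e : rel 'I_n) (se : symmetric e) (x : 'rV[R]_n) j :
  (x *m signless_laplacian R e) 0 j = (deg e j)%:R * x 0 j + \sum_i (e j i)%:R * x 0 i.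
Proof.
rewrite mxE; under eq_bigr => i _ do rewrite Qij mulrDr.
rewrite big_split /=; congr (_ + _).
  under eq_bigr => i _ do rewrite mulrCA.
  by rewrite sum_delta mulrC.
by apply: eq_bigr => i _; rewrite se mulrC.
Qed.

Definition bf {R : comNzRingType} {n} (B : 'M[R]_n) (a b : 'rV[R]_n) :=
  (a *m B *m b^T) 0 0.

Lemma bf_expand (R : comNzRingType) n (B : 'M[R]_n) (a c : 'rV[R]_n) t :
  bf B (a + t *: c) (a + t *: c) =
  bf B a a + t * bf B a c + t * bf B c a + t ^+ 2 * bf B c c.
Proof.
rewrite /bf linearD linearZ /= !mulmxDl !mulmxDr -!scalemxAl -!scalemxAr !mxE.
by rewrite expr2 !addrA mulrA.
Qed.

Lemma bf_sym (R : comNzRingType) n (B : 'M[R]_n) (a c : 'rV[R]_n) :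
  B^T = B -> bf B c a = bf B a c.
Proof.
move=> sB; rewrite /bf.
transitivity ((c *m B *m a^T)^T 0 0); first by rewrite [RHS]mxE.
by rewrite !trmx_mul trmxK sB mulmxA.
Qed.

Lemma sqsum_ge0 {R : realDomainType} {n} (z : 'rV[R]_n) : 0 <= (z *m z^T) 0 0.
Proof.
by rewrite mxE; apply: sumr_ge0 => i _; rewrite mxE -expr2 sqr_ge0.
Qed.

Lemma sqsum_eq0 {R : realDomainType} {n} (z : 'rV[R]_n) :
  (z *m z^T) 0 0 = 0 -> z = 0.
Proof.
rewrite mxE => /eqP; rewrite psumr_eq0 => [|i _]; last by rewrite mxE -expr2 sqr_ge0.
move=> /allP h; apply/rowP => i; rewrite mxE.
have := h i (mem_index_enum i); rewrite mxE -expr2 sqrf_eq0 => /eqP ->//.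
Qed.

Lemma rayleigh_eq (R : realFieldType) n (A : 'M[R]_n) (l : R) (x : 'rV[R]_n) :
  A^T = A -> (forall y : 'rV_n, (y *m A *m y^T) 0 0 <= l * (y *m y^T) 0 0) ->
  (x *m A *m x^T) 0 0 = l * (x *m x^T) 0 0 -> x *m A = l *: x.
Proof.
move=> sA hl hx.
set B := l%:M - A.
have sB : B^T = B by rewrite /B linearB /= tr_scalar_mx sA.
have gE : forall y, bf B y y = l * (y *m y^T) 0 0 - (y *m A *m y^T) 0 0.
  move=> y; rewrite /bf /B mulmxBr mul_mx_scalar mulmxBl -scalemxAl !mxE.
  by [].
have g0 : forall y, 0 <= bf B y y by move=> y; rewrite gE subr_ge0.
set z := x *m A - l *: x.
have xB : x *m B = - z by rewrite /z /B mulmxBr mul_mx_scalar opprB.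
have hxz : bf B x z = - (z *m z^T) 0 0.
  by rewrite /bf xB mulNmx; set M := z *m z^T; rewrite mxE.
have s0 := sqsum_ge0 z; set s := (z *m z^T) 0 0 in s0 hxz.
have b0 := g0 z; set b := bf B z z in b0.
have gx : bf B x x = 0 by rewrite gE hx subrr.
have ht := g0 (x + (s / (b + 1)) *: z).
rewrite bf_expand [bf B z x]bf_sym // hxz gx -/b in ht.
set t := s / (b + 1) in ht.
have tb : t * (b + 1) = s by rewrite /t divfK // gt_eqF // ltr_wpDl.
have t0 : 0 <= t by rewrite /t divr_ge0 // addr_ge0.
have : s = 0 by nra.
move/sqsum_eq0 => /eqP; rewrite subr_eq0 => /eqP //.
Qed.

Lemma bL1 (R : realDomainType) (a b c d : bool) :
  (a -> [|| b, c | d]) -> (a%:R : R) <= b%:R + c%:R + d%:R.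
Proof. by case: a; case: b; case: c; case: d => //= h; rewrite ?mulr0n ?mulr1n; try lra; have := h isT. Qed.

Lemma bL2 (R : realDomainType) (a b c : bool) :
  (a -> c) -> (b -> c) -> ~~ (a && b) -> (a%:R + b%:R : R) <= c%:R.
Proof. by case: a; case: b; case: c => //= h1 h2 h3; rewrite ?mulr0n ?mulr1n; try lra; try (have := h1 isT); try (have := h2 isT). Qed.

Lemma bL3 (R : realDomainType) (a b c d : bool) :
  (a -> c || d) -> (b -> d) -> ~~ (a && b) -> (a%:R + b%:R : R) <= c%:R + d%:R.
Proof. by case: a; case: b; case: c; case: d => //= h1 h2 h3; rewrite ?mulr0n ?mulr1n; try lra; try (have := h1 isT); try (have := h2 isT). Qed.

Lemma arithA (R : realFieldType) (q dz k xz xv SP Sz : R) :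
  q * xz = dz * xz + Sz -> dz <= k -> Sz + xz <= xv + SP -> 0 <= xz ->
  (q - k + 1) * xz <= xv + SP.
Proof.
move=> h1 h2 h3 h4.
have : dz * xz <= k * xz by apply: ler_wpM2r.
nra.
Qed.

Lemma arithB (R : realFieldType) (q du dv k xu xv SI SP Su Sv : R) :
  (q - k + 1) * SP <= k * (xv + SP) -> du <= q -> dv + 2 <= du ->
  1 + k <= dv -> k <= 2 -> 0 <= SP ->
  q * xv = dv * xv + Sv -> q * xu = du * xu + Su ->
  Sv <= xu + SI + SP -> xv + SI <= Su -> 0 < xv -> 0 <= xu -> xv < xu.
Proof.
move=> h1 h2 h3 h4 h5 h6 h7 h8 h9 h10 h11 h12.
have h13 : 0 <= (q - 2 * k - 1) * SP by apply: mulr_ge0 => //; lra.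
have h14 : 0 <= (2 - k) * xv by apply: mulr_ge0 => //; lra.
have hSP : SP <= xv by nra.
rewrite ltNge; apply/negP => hle.
have h15 : 0 <= (q + 1 - du) * (xv - xu) by apply: mulr_ge0; lra.
have h16 : 0 <= (du - dv - 2) * xv by apply: mulr_ge0; lra.
nra.
Qed.

Lemma symQ (R : nzRingType) n (e : rel 'I_n) :
  symmetric e -> (signless_laplacian R e)^T = signless_laplacian R e.
Proof.
move=> se; apply/matrixP => i j; rewrite mxE !Qij se eq_sym.
have [->|_] := eqVneq i j; by rewrite ?mul0r.
Qed.

Lemma Q_ge0 (R : realFieldType) n (e : rel 'I_n) i j :
  0 <= signless_laplacian R e i j.
Proof. by rewrite Qij addr_ge0 // mulr_ge0. Qed.

Lemma perron (R : realType) n (e : rel 'I_n) (q : R) :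
  symmetric e -> is_q e q ->
  exists x : 'rV[R]_n, [/\ x != 0, forall i, 0 <= x 0 i &
     x *m signless_laplacian R e = q *: x].
Proof.
move=> se [ev hmax].
set Q := signless_laplacian R e.
have sQ : Q^T = Q := symQ R n e se.
have hR := @Ray.rayleigh _ _ _ _ sQ hmax.
have [x0 hx0 nx0] := eigenvalueP ev.
pose x := \row_i `|x0 0 i|.
have xxE : (x *m x^T) 0 0 = (x0 *m x0^T) 0 0.
  rewrite !mxE; apply: eq_bigr => i _; rewrite !mxE.
  by rewrite -normrM ger0_norm // -expr2 sqr_ge0.
have q0 : (x0 *m Q *m x0^T) 0 0 = q * (x0 *m x0^T) 0 0.
  by rewrite hx0 -scalemxAl mxE.
have le1 : (x0 *m Q *m x0^T) 0 0 <= (x *m Q *m x^T) 0 0.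
  rewrite !qfE; apply: ler_sum => i _; apply: ler_sum => j _; rewrite !mxE.
  apply: le_trans (ler_norm _) _.
  by rewrite !normrM (@ger0_norm _ (_ + _)) // addr_ge0 // mulrn_wge0.
have eqx : (x *m Q *m x^T) 0 0 = q * (x *m x^T) 0 0.
  by apply/eqP; rewrite eq_le hR /= xxE -q0 le1.
exists x; split.
- apply: contra nx0 => /eqP x0E; apply/eqP/rowP => i.
  have := congr1 (fun M : 'M[R]_(1,n) => M 0 i) x0E; rewrite !mxE => /eqP.
  by rewrite normr_eq0 => /eqP.
- by move=> i; rewrite mxE normr_ge0.
- exact: (@rayleigh_eq _ _ _ _ _ sQ hR eqx).
Qed.

Lemma eigen_coord (R : realFieldType) n (e : rel 'I_n) (q : R) (x : 'rV[R]_n) :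
  symmetric e -> x *m signless_laplacian R e = q *: x ->
  forall j, q * x 0 j = (deg e j)%:R * x 0 j + \sum_i (e j i)%:R * x 0 i.
Proof.
move=> se hx j; rewrite -xQ // hx mxE //.
Qed.

Lemma positive (R : realFieldType) n (e : rel 'I_n) (q : R) (x : 'I_n -> R) :
  connected_graph e -> (forall i, 0 <= x i) -> (exists b, x b != 0) ->
  (forall j, q * x j = (deg e j)%:R * x j + \sum_i (e j i)%:R * x i) ->
  forall i, 0 < x i.
Proof.
move=> con x0 [b xb] heq.
have step : forall j i, x j = 0 -> e j i -> x i = 0.
  move=> j i xj eji.
  have hs : \sum_i (e j i)%:R * x i = 0.
    by have := heq j; rewrite xj !mulr0 add0r => <-.
  have := @psumr_eq0P _ _ predT (fun i => (e j i)%:R * x i)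
    (fun k _ => mulr_ge0 (ler0n _ _) (x0 k)) hs i isT.
  by rewrite /= eji mul1r.
have conn : forall a c, connect e a c -> x a = 0 -> x c = 0.
  move=> a c /connectP [p pth ->]; elim: p a pth => [|y p IH] a //=.
  by move=> /andP [eay pth] xa; apply: IH pth (step a y xa eay).
move=> i; rewrite lt_def x0 andbT; apply/eqP => xi.
by move/eqP: xb; apply; apply: conn (con i b) xi.
Qed.

Lemma comb (R : realFieldType) n (e : rel 'I_n) (u v : 'I_n) (x : 'I_n -> R) (q : R) :
  symmetric e -> irreflexive e -> e u v -> (deg e v + 2 <= deg e u)%N ->
  #|nbhd e v :\: (u |: nbhd e u)| \in [:: 1%N; 2%N] ->
  (forall z, z \in nbhd e v :\: (u |: nbhd e u) ->
     nbhd e z :\ v \subset nbhd e v :\: nbhd e u) ->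
  (forall i, 0 <= x i) -> 0 < x v -> (deg e u)%:R <= q ->
  (forall j, q * x j = (deg e j)%:R * x j + \sum_i (e j i)%:R * x i) ->
  x v < x u.
Proof.
move=> se irr euv dg hP hz x0 xv0 qdu heq.
set P := nbhd e v :\: (u |: nbhd e u).
set I := nbhd e v :&: nbhd e u.
have sle : forall c c' : 'I_n -> R, (forall i, c i <= c' i) ->
    forall y : 'I_n -> R, (forall i, 0 <= y i) ->
    \sum_i c i * y i <= \sum_i c' i * y i.
  move=> c c' hc y y0; apply: ler_sum => i _; apply: ler_wpM2r; [exact: y0 | exact: hc].
have sset : forall (A : {set 'I_n}) (y : 'I_n -> R),
    \sum_i (i \in A)%:R * y i = \sum_(i in A) y i.
  move=> A y; rewrite [RHS]big_mkcond /=; apply: eq_bigr => i _.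
  by case: (i \in A); rewrite ?mul1r ?mul0r.
have sadd : forall (c c' y : 'I_n -> R),
    \sum_i (c i + c' i) * y i = \sum_i c i * y i + \sum_i c' i * y i.
  by move=> c c' y; rewrite -big_split /=; apply: eq_bigr => i _; rewrite mulrDl.
have scard : forall A : {set 'I_n}, \sum_(i in A) (1 : R) = #|A|%:R.
  by move=> A; rewrite sumr_const.
have sdeg : forall j, (deg e j)%:R = \sum_i (e j i)%:R * (1 : R).
  by move=> j; rewrite degE; apply: eq_bigr => i _; rewrite mulr1.
have one0 : forall i : 'I_n, (0 : R) <= 1 by move=> _; exact: ler01.
have c1 : forall i, (e v i)%:R <= ((i == u)%:R + (i \in I)%:R + (i \in P)%:R : R).
  move=> i; apply: bL1; rewrite !inE => ->.
  by case: (i == u); case: (e u i).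
have c2 : forall i, ((i == v)%:R + (i \in I)%:R : R) <= (e u i)%:R.
  move=> i; apply: bL2.
  - by move/eqP->.
  - by rewrite !inE => /andP[].
  - by apply/andP => -[/eqP -> ]; rewrite !inE irr.
have c3 : forall z, z \in P -> forall i,
    ((e z i)%:R + (i == z)%:R : R) <= (i == v)%:R + (i \in P)%:R.
  move=> z zP i; have hzi := hz z zP.
  apply: bL3.
  - move=> ezi; have [//|iv] := eqVneq i v; rewrite /=.
    have : i \in nbhd e z :\ v by rewrite !inE iv ezi.
    move/(subsetP hzi); rewrite !inE => /andP [evi nui].
    have iu : i != u.
      apply: contraTneq zP => eiu; rewrite !inE negb_or.
      by rewrite eiu in ezi; rewrite se ezi andbF.
    by rewrite (negbTE iu) (negbTE evi) nui.
  - by move/eqP->.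
  - by apply/andP => -[ezi /eqP iz]; rewrite iz irr in ezi.
have c4 : forall i, ((i == u)%:R + (i \in P)%:R : R) <= (e v i)%:R.
  move=> i; apply: bL2.
  - by move/eqP->; rewrite se.
  - by rewrite !inE => /andP[].
  - by apply/andP => -[/eqP ->]; rewrite !inE eqxx.
have F5 : \sum_i (e v i)%:R * x i <= x u + \sum_(i in I) x i + \sum_(i in P) x i.
  by have := sle _ _ c1 x x0; rewrite !sadd sum_delta !sset.
have F6 : x v + \sum_(i in I) x i <= \sum_i (e u i)%:R * x i.
  by have := sle _ _ c2 x x0; rewrite !sadd sum_delta !sset.
have F1 : 1 + (#|P|%:R : R) <= (deg e v)%:R.
  by have := sle _ _ c4 _ one0; rewrite !sadd sum_delta !sset scard -sdeg.
have F3 : forall z, z \in P -> (deg e z)%:R <= (#|P|%:R : R).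
  move=> z zP; have := sle _ _ (c3 z zP) _ one0.
  by rewrite !sadd !sum_delta !sset scard -sdeg addrC lerD2l.
have F4 : forall z, z \in P -> \sum_i (e z i)%:R * x i + x z <= x v + \sum_(i in P) x i.
  by move=> z zP; have := sle _ _ (c3 z zP) x x0; rewrite !sadd !sum_delta !sset.
have F9 : (q - #|P|%:R + 1) * \sum_(i in P) x i <= #|P|%:R * (x v + \sum_(i in P) x i).
  rewrite big_distrr /=.
  apply: (le_trans (y := \sum_(z in P) (x v + \sum_(i in P) x i))).
    apply: ler_sum => z zP.
    exact: arithA (heq z) (F3 z zP) (F4 z zP) (x0 z).
  by rewrite sumr_const mulr_natl.
have F2 : (deg e v)%:R + 2 <= (deg e u)%:R :> R.
  by rewrite -natrD ler_nat.
have k2 : (#|P|%:R : R) <= 2.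
  have : (#|P| <= 2)%N by move: hP; rewrite !inE => /orP[]/eqP->.
  by rewrite -(ler_nat R).
have SP0 : 0 <= \sum_(i in P) x i by apply: sumr_ge0 => i _.
exact: arithB F9 qdu F2 F1 k2 SP0 (heq v) (heq u) F5 F6 xv0 (x0 u).
Qed.

Lemma move_pw (R : comNzRingType) n (e : rel 'I_n) (u v w i j : 'I_n) :
  symmetric e -> irreflexive e -> e u v -> e v w -> ~~ e u w -> w != u ->
  (move_edge e v w u i j)%:R = (e i j)%:R +
    ((i == u)%:R * (j == w)%:R + (i == w)%:R * (j == u)%:R
     - (i == v)%:R * (j == w)%:R - (i == w)%:R * (j == v)%:R) :> R.
Proof.
move=> se irr euv evw nuw wu.
have uv : u != v by apply: contraTneq euv => ->; rewrite irr.
have vw : v != w by apply: contraTneq evw => ->; rewrite irr.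
have vu : v != u by rewrite eq_sym.
have wv : w != v by rewrite eq_sym.
have uw : u != w by rewrite eq_sym.
have evu : e v u by rewrite se.
have ewv : e w v by rewrite se.
have nwu : ~~ e w u by rewrite se.
rewrite /move_edge.
have [->|iu] := eqVneq i u; [|have [->|iv] := eqVneq i v; [|have [->|iw] := eqVneq i w]];
have [->|ju] := eqVneq j u; try (have [->|jv] := eqVneq j v; try have [->|jw] := eqVneq j w);
rewrite ?eqxx ?irr ?euv ?evw ?evu ?ewv ?(negbTE nuw) ?(negbTE nwu)
  ?(negbTE uv) ?(negbTE vu) ?(negbTE vw) ?(negbTE wv) ?(negbTE uw) ?(negbTE wu)
  ?(negbTE iu) ?(negbTE iv) ?(negbTE iw) ?(negbTE ju) ?(negbTE jv) ?(negbTE jw)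
  /= ?andbT ?andbF ?orbT ?orbF /= ?mulr1n ?mulr0n; ring.
Qed.

Lemma dd (R : comNzRingType) n (g : 'I_n -> 'I_n -> R) (a b : 'I_n) :
  \sum_i \sum_j ((i == a)%:R * (j == b)%:R) * g i j = g a b.
Proof.
under eq_bigr => i _ do under eq_bigr => j _ do rewrite -mulrA.
under eq_bigr => i _ do rewrite -big_distrr /=.
by rewrite sum_delta sum_delta.
Qed.

Lemma dsum4 (R : comNzRingType) n (g : 'I_n -> 'I_n -> R) (a1 b1 a2 b2 a3 b3 a4 b4 : 'I_n) :
  \sum_i \sum_j ((i == a1)%:R * (j == b1)%:R + (i == a2)%:R * (j == b2)%:R
     - (i == a3)%:R * (j == b3)%:R - (i == a4)%:R * (j == b4)%:R) * g i j
  = g a1 b1 + g a2 b2 - g a3 b3 - g a4 b4.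
Proof.
under eq_bigr => i _ do under eq_bigr => j _ do rewrite !mulrBl mulrDl.
under eq_bigr => i _ do rewrite !sumrB big_split /=.
by rewrite !sumrB big_split /= !dd.
Qed.

Lemma qf_delta (R : comNzRingType) n (Q : 'M[R]_n) (a : 'I_n) :
  (delta_mx (0 : 'I_1) a *m Q *m (delta_mx (0 : 'I_1) a)^T) 0 0 = Q a a.
Proof.
by rewrite -rowE trmx_delta -colE !mxE.
Qed.

Lemma move_sym n (e : rel 'I_n) (u v w : 'I_n) :
  symmetric e -> symmetric (move_edge e v w u).
Proof.
move=> se a b; rewrite /move_edge se.
by case: (a == v); case: (a == w); case: (a == u); case: (b == v);
  case: (b == w); case: (b == u); case: (e b a).
Qed.

Lemma arithC (R : realFieldType) (a b c : R) :
  0 <= a -> a < b -> 0 <= c -> 0 < (b + c) ^+ 2 - (a + c) ^+ 2.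
Proof. move=> h1 h2 h3; nra. Qed.

Theorem lemma2p6 (R : realType) (n : nat) (e : rel 'I_n) (u v w : 'I_n) :
  simple_graph e -> connected_graph e ->
  v \in nbhd e u ->
  (deg e v + 2 <= deg e u)%N ->
  w \in nbhd e v -> w \notin u |: nbhd e u ->
  #|nbhd e v :\: (u |: nbhd e u)| \in [:: 1%N; 2%N] ->
  (forall z, z \in nbhd e v :\: (u |: nbhd e u) ->
     nbhd e z :\ v \subset nbhd e v :\: nbhd e u) ->
  forall q q' : R, is_q e q -> is_q (move_edge e v w u) q' -> q < q'.
Proof.
move=> [se irr] con huv dg hvw hwu hP hz q q' isq isq'.
have euv : e u v by move: huv; rewrite inE.
have evw : e v w by move: hvw; rewrite inE.
move: hwu; rewrite !inE negb_or => /andP [wu nuw].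
have [x [nx x0 hx]] := perron R n e q se isq.
have heq := eigen_coord R n e q x se hx.
have [b xb] : exists b, x 0 b != 0.
  case: (pickP (fun b => x 0 b != 0)) => [b xb|h]; first by exists b.
  by case/negP: nx; apply/eqP/rowP => i; have /negbFE/eqP := h i; rewrite mxE.
have xpos := @positive R n e q (fun i => x 0 i) con x0 (ex_intro _ b xb) heq.
have sQ := symQ R n e se.
have hR := @Ray.rayleigh _ _ _ _ sQ isq.2.
have qdu : (deg e u)%:R <= q.
  have := hR (delta_mx (0 : 'I_1) u); rewrite qf_delta Qij eqxx irr mul1r addr0.
  have -> : (delta_mx (0 : 'I_1) u *m (delta_mx (0 : 'I_1) u)^T) 0 0 = 1 :> R.
    by rewrite -rowE trmx_delta !mxE !eqxx.
  by rewrite mulr1.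
have xuv := @comb R n e u v (fun i => x 0 i) q se irr euv dg hP hz x0 (xpos v) qdu heq.
set Q := signless_laplacian R e in hR hx.
set Q' := signless_laplacian R (move_edge e v w u).
have sQ' : Q'^T = Q' := symQ R n _ (move_sym n e u v w se).
have hR' := @Ray.rayleigh _ _ _ _ sQ' isq'.2 x.
have qQ : (x *m Q *m x^T) 0 0 = q * (x *m x^T) 0 0 by rewrite hx -scalemxAl mxE.
have qf' : (x *m Q' *m x^T) 0 0 = (x *m Q *m x^T) 0 0 +
    ((x 0 u + x 0 w) ^+ 2 - (x 0 v + x 0 w) ^+ 2).
  rewrite /Q /Q' !qfQ.
  under eq_bigr => i _ do under eq_bigr => j _ do
    rewrite (move_pw R n e u v w i j se irr euv evw nuw wu) mulrDl.
  under eq_bigr => i _ do rewrite big_split /=.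
  rewrite big_split /= dsum4; congr (_ + _); ring.
have xx0 : 0 < (x *m x^T) 0 0.
  rewrite lt_def sqsum_ge0 andbT; apply: contra nx => /eqP h.
  by apply/eqP; apply: sqsum_eq0.
have pos := @arithC _ _ _ _ (x0 v) xuv (x0 w).
rewrite -(ltr_pM2r xx0) -qQ.
apply: lt_le_trans hR'; rewrite qf' ltrDl //.
Qed.
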